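(* Let $\mathrm{FOV}_{\min}\in(0,\pi/2]$, $L_{\max}>0$, $A_{\max}>0$. The constrained problem of maximising $R(B,\mathrm{FOV})$ over $B>0$, $\mathrm{FOV}\in(0,\pi/2]$ subject to $\mathrm{FOV}\ge\mathrm{FOV}_{\min}$, $L_{\mathrm{ADR}}(B,\mathrm{FOV})\le L_{\max}$ and $A_{\mathrm{ADR}}(B,\mathrm{FOV})\le A_{\max}$ is equivalent to the single-variable problem of maximising $B\mapsto R(B,f_{\mathrm{FOV}}(B))$ over $\{B>0: f_{\mathrm{FOV}}(B)\le\pi/2\}$: the two suprema coincide, and $(B^*,\mathrm{FOV}^* )$ is a maximiser of the constrained problem if and only if $\mathrm{FOV}^*=f_{\mathrm{FOV}}(B^* )$ and $B^*$ maximises $R(B,f_{\mathrm{FOV}}(B))$ over that set.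
   Context: Fix constants: an integer $N_{\mathrm{tier}}\ge1$; an integer $N_{\mathrm{PD}}\ge 1$; $\mathrm{FF}\in(0,1]$; $K_{\mathrm{PD}}>0$; $n_{\mathrm{CPC}}\ge 1$; $P_{\mathrm t}>0$; $w>0$; $R_{\mathrm{PD}}>0$; $\Gamma>0$; $N_0>0$. The design variables are $B>0$ and $\mathrm{FOV}\in(0,\pi/2]$. Write $\theta=\theta_{\mathrm{CPC}}=\mathrm{FOV}/(2N_{\mathrm{tier}}+1)$. Define $D_2(B)=\frac{1}{K_{\mathrm{PD}}B}\sqrt{N_{\mathrm{PD}}/\mathrm{FF}}$, $D_1(B,\mathrm{FOV})=D_2(B)\,\frac{n_{\mathrm{CPC}}}{\sin\theta}$, $P_{\mathrm r}(B,\mathrm{FOV})=\mathrm{FF}\,P_{\mathrm t}\Big(1-\exp\Big(-\frac{D_1(B,\mathrm{FOV})^2}{2w^2}\Big)\Big)$, and the achievable rate $R(B,\mathrm{FOV})=B\log_2\Big(1+\frac{(R_{\mathrm{PD}}P_{\mathrm r}(B,\mathrm{FOV}))^2}{\Gamma N_0 B}\Big)$. Set $K_1=\frac{1}{2K_{\mathrm{PD}}}\sqrt{N_{\mathrm{PD}}/\mathrm{FF}}$ and $K_2=\frac{\pi N_{\mathrm{PD}}n_{\mathrm{CPC}}^2}{4\,\mathrm{FF}\,K_{\mathrm{PD}}^2}$, and define $L_{\mathrm{ADR}}(B,\mathrm{FOV})=\frac{K_1}{B}\cdot\frac{n_{\mathrm{CPC}}+\sin\theta}{\sin\theta\,\tan\theta}$,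 $A_{\mathrm{ADR}}(B,\mathrm{FOV})=\frac{K_2}{B^2\sin^2\theta}\Big(1+\sum_{i=1}^{N_{\mathrm{tier}}}6i\cos(2i\theta)\Big)$. Given $L_{\max},A_{\max}>0$, define for $\mathrm{FOV}\in(0,\pi/2]$ the boundary functions $f_{\mathrm L}(\mathrm{FOV})=\frac{K_1}{L_{\max}}\cdot\frac{n_{\mathrm{CPC}}+\sin\theta}{\sin\theta\tan\theta}$ and $f_{\mathrm A}(\mathrm{FOV})=\frac{1}{\sin\theta}\sqrt{\frac{K_2}{A_{\max}}\Big(1+\sum_{i=1}^{N_{\mathrm{tier}}}6i\cos(2i\theta)\Big)}$, their (generalised) inverses $f_{\mathrm L}^{-1}(B)=\inf\{\mathrm{FOV}\in(0,\pi/2]: f_{\mathrm L}(\mathrm{FOV})\le B\}$ and $f_{\mathrm A}^{-1}(B)=\inf\{\mathrm{FOV}\in(0,\pi/2]: f_{\mathrm A}(\mathrm{FOV})\le B\}$ (with $\inf\emptyset=+\infty$), and $f_{\mathrm{FOV}}(B)=\max\{\mathrm{FOV}_{\min},\,f_{\mathrm L}^{-1}(B),\,f_{\mathrm A}^{-1}(B)\}$. *)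

(* Defs.v *)
From Stdlib Require Import Reals.
From Coquelicot Require Import Coquelicot.
Open Scope R_scope.

Definition Rbar_maxi (x y : Rbar) : Rbar :=
  if Rbar_le_dec x y then y else x.

Definition log2 (x : R) : R := ln x / ln 2.

Definition theta (Ntier : nat) (FOV : R) : R := FOV / (2 * INR Ntier + 1).

Fixpoint tier_sum (n : nat) (th : R) : R :=
  match n with
  | O => 0
  | S m => tier_sum m th + 6 * INR (S m) * cos (2 * INR (S m) * th)
  end.

Definition D2 (NPD : nat) (FF KPD B : R) : R :=
  1 / (KPD * B) * sqrt (INR NPD / FF).

Definition D1 (Ntier NPD : nat) (FF KPD nCPC B FOV : R) : R :=
  D2 NPD FF KPD B * (nCPC / sin (theta Ntier FOV)).

Definition Pr (Ntier NPD : nat) (FF KPD nCPC Pt w B FOV : R) : R :=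
  FF * Pt * (1 - exp (- (D1 Ntier NPD FF KPD nCPC B FOV ^ 2) / (2 * w ^ 2))).

Definition rate (Ntier NPD : nat) (FF KPD nCPC Pt w RPD Gamma N0 B FOV : R) : R :=
  B * log2 (1 + (RPD * Pr Ntier NPD FF KPD nCPC Pt w B FOV) ^ 2 / (Gamma * N0 * B)).

Definition K1 (NPD : nat) (FF KPD : R) : R :=
  1 / (2 * KPD) * sqrt (INR NPD / FF).

Definition K2 (NPD : nat) (FF KPD nCPC : R) : R :=
  PI * INR NPD * nCPC ^ 2 / (4 * FF * KPD ^ 2).

Definition L_ADR (Ntier NPD : nat) (FF KPD nCPC B FOV : R) : R :=
  let th := theta Ntier FOV in
  K1 NPD FF KPD / B * ((nCPC + sin th) / (sin th * tan th)).

Definition A_ADR (Ntier NPD : nat) (FF KPD nCPC B FOV : R) : R :=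
  let th := theta Ntier FOV in
  K2 NPD FF KPD nCPC / (B ^ 2 * sin th ^ 2) * (1 + tier_sum Ntier th).

Definition f_L (Ntier NPD : nat) (FF KPD nCPC Lmax FOV : R) : R :=
  let th := theta Ntier FOV in
  K1 NPD FF KPD / Lmax * ((nCPC + sin th) / (sin th * tan th)).

Definition f_A (Ntier NPD : nat) (FF KPD nCPC Amax FOV : R) : R :=
  let th := theta Ntier FOV in
  1 / sin th * sqrt (K2 NPD FF KPD nCPC / Amax * (1 + tier_sum Ntier th)).

(* generalised inverse: inf { FOV in (0, pi/2] | f FOV <= B }, +oo if empty *)
Definition gen_inv (f : R -> R) (B : R) : Rbar :=
  Glb_Rbar (fun FOV => 0 < FOV <= PI / 2 /\ f FOV <= B).

Definition f_FOV (Ntier NPD : nat) (FF KPD nCPC Lmax Amax FOVmin B : R) : Rbar :=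
  Rbar_maxi (Finite FOVmin)
    (Rbar_maxi (gen_inv (f_L Ntier NPD FF KPD nCPC Lmax) B)
               (gen_inv (f_A Ntier NPD FF KPD nCPC Amax) B)).

(* Main.v *)
Require Import Defs.
From Stdlib Require Import Reals Lra.
From Coquelicot Require Import Coquelicot.
Open Scope R_scope.
Lemma cL Ntier NPD FF KPD nCPC Lmax x : sin (theta Ntier x) <> 0 -> cos (theta Ntier x) <> 0 -> 2 * INR Ntier + 1 <> 0 ->
  ex_derive (f_L Ntier NPD FF KPD nCPC Lmax) x.
Proof. intros. unfold f_L, theta, tan. auto_derive. repeat split; auto.
  unfold theta, Rdiv in *. apply Rmult_integral_contrapositive_currified; auto.
  apply Rmult_integral_contrapositive_currified; auto. apply Rinv_neq_0_compat; auto. Qed.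
Lemma ts_der n x : ex_derive (tier_sum n) x.
Proof. induction n; simpl.
- auto_derive. auto.
- apply (ex_derive_plus (tier_sum n) (fun th => 6 * INR (S n) * cos (2 * INR (S n) * th))); auto. auto_derive. auto.
Qed.
Lemma cA Ntier NPD FF KPD nCPC Amax x : sin (theta Ntier x) <> 0 -> 2 * INR Ntier + 1 <> 0 ->
  0 < K2 NPD FF KPD nCPC / Amax * (1 + tier_sum Ntier (theta Ntier x)) ->
  ex_derive (f_A Ntier NPD FF KPD nCPC Amax) x.
Proof. intros. unfold f_A.
  apply (ex_derive_mult (fun x => 1 / sin (theta Ntier x))
     (fun x => sqrt (K2 NPD FF KPD nCPC / Amax * (1 + tier_sum Ntier (theta Ntier x))))).
  - unfold theta in *. auto_derive. auto.
  - apply (ex_derive_comp sqrt (fun x => K2 NPD FF KPD nCPC / Amax * (1 + tier_sum Ntier (theta Ntier x)))).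
    + auto_derive. auto.
    + apply (ex_derive_mult (fun _ => K2 NPD FF KPD nCPC / Amax)). apply ex_derive_const.
      apply (ex_derive_plus (fun _ => 1)). apply ex_derive_const.
      apply (ex_derive_comp (tier_sum Ntier) (theta Ntier)). apply ts_der. unfold theta. auto_derive. auto.
Qed.
From Stdlib Require Import Classical.
Lemma gen_inv_le (f : R -> R) (B m : R):
 (forall x y, 0 < x -> x <= y -> y <= PI/2 -> f y <= f x) ->
 continuous f m -> 0 < m <= PI/2 ->
 (Rbar_le (gen_inv f B) (Finite m) <-> f m <= B).
Proof.
  intros Hmono Hc0 Hm.
  assert (Hc : continuity_pt f m) by (apply continuity_pt_filterlim; exact Hc0).
  split.
  - intro H. destruct (Rle_dec (f m) B) as [|Hn]; auto. exfalso. apply Rnot_le_lt in Hn.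
    unfold continuity_pt, continue_in, limit1_in, limit_in in Hc.
    destruct (Hc (f m - B)) as [d [Hd Hx]]; [lra|].
    assert (Hex : exists x, (0 < x <= PI/2 /\ f x <= B) /\ x < m + d).
    { apply NNPP; intro Hne.
      assert (Hl : Rbar_le (Finite (m+d)) (gen_inv f B)).
      { destruct (Glb_Rbar_correct (fun FOV => 0 < FOV <= PI / 2 /\ f FOV <= B)) as [_ Hg].
        apply Hg. intros x Hx'. simpl. apply Rnot_lt_le. intro. apply Hne; eauto. }
      pose proof (Rbar_le_trans _ _ _ Hl H) as Ht. simpl in Ht. lra. }
    destruct Hex as [x [[Hx1 Hx2] Hx3]]. destruct (Rle_dec x m).
    + pose proof (Hmono x m ltac:(lra) r ltac:(lra)). lra.
    + specialize (Hx x). simpl in Hx. unfold R_dist in Hx.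
      assert (Hd2 : Rabs (f x - f m) < f m - B).
      { apply Hx. split. split. exact I. intro Heq; lra. apply Rabs_def1; lra. }
      apply Rabs_def2 in Hd2. lra.
  - intro. destruct (Glb_Rbar_correct (fun FOV => 0 < FOV <= PI / 2 /\ f FOV <= B)) as [Hg _].
    apply Hg. split; auto.
Qed.
Lemma th_facts N F: (1<=N)%nat -> 0 < F <= PI/2 ->
  0 < theta N F /\ theta N F < PI/2 /\ 2*INR N*theta N F <= PI/2 /\ 0 < 2 * INR N + 1.
Proof.
  intros HN HF. assert (HI : 1 <= INR N) by (apply (le_INR 1); auto).
  assert (Hc : 0 < 2 * INR N + 1) by lra.
  assert (Ht : theta N F * (2 * INR N + 1) = F) by (unfold theta; field; lra).
  pose proof PI_RGT_0.
  set (t := theta N F) in *.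
  assert (0 < t) by nra. assert (t * 3 <= F) by nra.
  assert (2*INR N*t = F - t) by (rewrite <- Ht; ring). repeat split; lra.
Qed.
Lemma th_mono N x y : (1<=N)%nat -> x < y -> theta N x < theta N y.
Proof.
  intros HN H. assert (HI : 1 <= INR N) by (apply (le_INR 1); auto).
  unfold theta. apply Rmult_lt_compat_r; [apply Rinv_0_lt_compat; lra | exact H].
Qed.
Lemma th_mono_le N x y : (1<=N)%nat -> x <= y -> theta N x <= theta N y.
Proof.
  intros HN H. destruct H as [H|H]. left; apply th_mono; auto. subst; lra.
Qed.
Lemma ts_nonneg n th: 0 <= th -> 2*INR n*th <= PI/2 -> 0 <= tier_sum n th.
Proof.
  induction n; intros H0 H1; cbn [tier_sum]. lra.
  rewrite S_INR in H1. pose proof (pos_INR n).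
  assert (0 <= cos (2 * INR (S n) * th)).
  { apply cos_ge_0; rewrite S_INR; pose proof PI_RGT_0; nra. }
  assert (0 <= tier_sum n th) by (apply IHn; nra).
  assert (0 <= INR (S n)) by apply pos_INR.
  assert (0 <= INR (S n) * cos (2 * INR (S n) * th)) by (apply Rmult_le_pos; auto). rewrite Rmult_assoc. lra.
Qed.
Lemma ts_mono n a b: 0 <= a <= b -> 2*INR n*b <= PI/2 -> tier_sum n b <= tier_sum n a.
Proof.
  induction n; intros H0 H1; cbn [tier_sum]. lra.
  pose proof (pos_INR n). pose proof PI_RGT_0.
  assert (cos (2 * INR (S n) * b) <= cos (2 * INR (S n) * a)).
  { apply cos_decr_1; rewrite S_INR in *; nra. }
  assert (tier_sum n b <= tier_sum n a) by (apply IHn; rewrite S_INR in H1; nra).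
  assert (0 <= INR (S n)) by apply pos_INR.
  assert (INR (S n) * cos (2 * INR (S n) * b) <= INR (S n) * cos (2 * INR (S n) * a)) by (apply Rmult_le_compat_l; auto). rewrite !(Rmult_assoc 6). lra.
Qed.
Lemma div_le_helper a b c d : 0 < b -> 0 < d -> a * d <= c * b -> a / b <= c / d.
Proof.
  intros Hb Hd H. replace (a/b) with ((a*d) * /(b*d)) by (field; lra).
  replace (c/d) with ((c*b) * /(b*d)) by (field; lra).
  apply Rmult_le_compat_r; auto. left; apply Rinv_0_lt_compat; nra.
Qed.
Lemma trig_facts t : 0 < t < PI/2 -> 0 < sin t /\ 0 < cos t.
Proof. intros. pose proof PI_RGT_0. split. apply sin_gt_0; lra. apply cos_gt_0; lra. Qed.
Lemma sc_mono a b : 0 < a -> a <= b -> b < PI/2 -> sin a <= sin b /\ cos b <= cos a.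
Proof. intros. pose proof PI_RGT_0. split. apply sin_incr_1; lra. apply cos_decr_1; lra. Qed.
Lemma K1_nonneg NPD FF KPD : 0 < KPD -> 0 <= K1 NPD FF KPD.
Proof. intros. unfold K1. apply Rmult_le_pos; [left; apply Rdiv_lt_0_compat; lra | apply sqrt_pos]. Qed.
Lemma K2_pos NPD FF KPD nCPC : (1 <= NPD)%nat -> 0 < FF -> 0 < KPD -> 1 <= nCPC -> 0 < K2 NPD FF KPD nCPC.
Proof.
  intros. unfold K2. assert (1 <= INR NPD) by (apply (le_INR 1); auto). pose proof PI_RGT_0.
  apply Rdiv_lt_0_compat. apply Rmult_lt_0_compat. apply Rmult_lt_0_compat; lra. apply pow_lt; lra.
  apply Rmult_lt_0_compat. lra. apply pow_lt; lra.
Qed.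
Lemma fL_mono N NPD FF KPD nCPC Lmax : (1<=N)%nat -> 0 < KPD -> 1 <= nCPC -> 0 < Lmax ->
  forall x y, 0 < x -> x <= y -> y <= PI/2 ->
  f_L N NPD FF KPD nCPC Lmax y <= f_L N NPD FF KPD nCPC Lmax x.
Proof.
  intros HN HK Hn HL x y Hx Hxy Hy. unfold f_L. cbv zeta.
  destruct (th_facts N x HN ltac:(lra)) as [Tx1 [Tx2 _]].
  destruct (th_facts N y HN ltac:(lra)) as [Ty1 [Ty2 _]].
  pose proof (th_mono_le N x y HN Hxy) as Hm.
  set (tx := theta N x) in *. set (ty := theta N y) in *.
  destruct (sc_mono tx ty) as [Hs Hc]; auto.
  destruct (trig_facts tx) as [sx cx]; auto. destruct (trig_facts ty) as [sy cy]; auto.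
  apply Rmult_le_compat_l.
  { apply Rmult_le_pos; [apply K1_nonneg; auto | left; apply Rinv_0_lt_compat; lra]. }
  unfold tan.
  replace ((nCPC + sin ty)/(sin ty * (sin ty / cos ty))) with ((nCPC+sin ty)*cos ty / (sin ty * sin ty)) by (field; lra).
  replace ((nCPC + sin tx)/(sin tx * (sin tx / cos tx))) with ((nCPC+sin tx)*cos tx / (sin tx * sin tx)) by (field; lra).
  apply div_le_helper; try nra.
  assert (A : (nCPC + sin ty) * (sin tx * sin tx) <= (nCPC + sin tx) * (sin ty * sin ty)).
  { assert (sin tx * sin tx <= sin ty * sin ty) by nra.
    assert (sin ty * (sin tx * sin tx) <= sin tx * (sin ty * sin ty)).
    { assert (0 <= sin tx * sin ty) by nra.
      replace (sin ty * (sin tx * sin tx)) with ((sin tx * sin ty) * sin tx) by ring.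
      replace (sin tx * (sin ty * sin ty)) with ((sin tx * sin ty) * sin ty) by ring.
      apply Rmult_le_compat_l; auto. }
    nra. }
  assert (0 <= (nCPC + sin ty) * (sin tx * sin tx)) by nra.
  nra.
Qed.
Lemma fA_mono N NPD FF KPD nCPC Amax : (1<=N)%nat -> 0 < FF -> 0 < KPD -> 0 < Amax ->
  forall x y, 0 < x -> x <= y -> y <= PI/2 ->
  f_A N NPD FF KPD nCPC Amax y <= f_A N NPD FF KPD nCPC Amax x.
Proof.
  intros HN HF HK HA x y Hx Hxy Hy. unfold f_A. cbv zeta.
  destruct (th_facts N x HN ltac:(lra)) as [Tx1 [Tx2 [Tx3 _]]].
  destruct (th_facts N y HN ltac:(lra)) as [Ty1 [Ty2 [Ty3 _]]].
  pose proof (th_mono_le N x y HN Hxy) as Hm.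
  set (tx := theta N x) in *. set (ty := theta N y) in *.
  destruct (sc_mono tx ty) as [Hs Hc]; auto.
  destruct (trig_facts tx) as [sx cx]; auto. destruct (trig_facts ty) as [sy cy]; auto.
  assert (HK2 : 0 <= K2 NPD FF KPD nCPC).
  { unfold K2. pose proof PI_RGT_0. pose proof (pos_INR NPD).
    apply Rmult_le_pos. apply Rmult_le_pos. apply Rmult_le_pos; lra. apply pow2_ge_0.
    left; apply Rinv_0_lt_compat. apply Rmult_lt_0_compat. lra. apply pow_lt; lra. }
  assert (HKA : 0 <= K2 NPD FF KPD nCPC / Amax).
  { apply Rmult_le_pos; auto. left; apply Rinv_0_lt_compat; lra. }
  pose proof (ts_mono N tx ty ltac:(lra) Ty3).
  pose proof (ts_nonneg N ty ltac:(lra) Ty3).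
  apply Rmult_le_compat.
  - unfold Rdiv; rewrite Rmult_1_l; left; apply Rinv_0_lt_compat; lra.
  - apply sqrt_pos.
  - unfold Rdiv; rewrite !Rmult_1_l; apply Rinv_le_contravar; lra.
  - apply sqrt_le_1_alt. apply Rmult_le_compat_l; lra.
Qed.
Lemma fL_cont N NPD FF KPD nCPC Lmax m : (1<=N)%nat -> 0 < m <= PI/2 ->
  continuous (f_L N NPD FF KPD nCPC Lmax) m.
Proof.
  intros HN Hm. destruct (th_facts N m HN Hm) as [T1 [T2 [_ Hc]]].
  destruct (trig_facts (theta N m)) as [s c]; auto.
  apply (ex_derive_continuous (f_L N NPD FF KPD nCPC Lmax)). apply cL; lra.
Qed.
Lemma fA_cont N NPD FF KPD nCPC Amax m : (1<=N)%nat -> (1 <= NPD)%nat -> 0 < FF -> 0 < KPD -> 1 <= nCPC -> 0 < Amax ->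
  0 < m <= PI/2 -> continuous (f_A N NPD FF KPD nCPC Amax) m.
Proof.
  intros HN HNPD HF HK Hn HA Hm. destruct (th_facts N m HN Hm) as [T1 [T2 [T3 Hc]]].
  destruct (trig_facts (theta N m)) as [s c]; auto.
  apply (ex_derive_continuous (f_A N NPD FF KPD nCPC Amax)). apply cA; try lra.
  pose proof (ts_nonneg N (theta N m) ltac:(lra) T3).
  pose proof (K2_pos NPD FF KPD nCPC HNPD HF HK Hn).
  apply Rmult_lt_0_compat. apply Rdiv_lt_0_compat; lra. lra.
Qed.
Lemma rate_mono N NPD FF KPD nCPC Pt w RPD Gamma N0 B x y :
  (1<=N)%nat -> (1 <= NPD)%nat -> 0 < FF -> 0 < KPD -> 1 <= nCPC -> 0 < Pt -> 0 < w -> 0 < RPD ->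
  0 < Gamma -> 0 < N0 -> 0 < B -> 0 < x -> x < y -> y <= PI/2 ->
  rate N NPD FF KPD nCPC Pt w RPD Gamma N0 B y < rate N NPD FF KPD nCPC Pt w RPD Gamma N0 B x.
Proof.
  intros HN HNPD HF HK Hn HPt Hw HR HG HN0 HB Hx Hxy Hy.
  destruct (th_facts N x HN ltac:(lra)) as [Tx1 [Tx2 _]].
  destruct (th_facts N y HN ltac:(lra)) as [Ty1 [Ty2 _]].
  pose proof (th_mono N x y HN Hxy) as Hm.
  set (tx := theta N x) in *. set (ty := theta N y) in *.
  assert (Hs : sin tx < sin ty) by (apply sin_increasing_1; lra).
  destruct (trig_facts tx) as [sx cx]; auto. destruct (trig_facts ty) as [sy cy]; auto.
  unfold rate, Pr, D1.
  fold tx ty.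
  assert (HD2 : 0 < D2 NPD FF KPD B).
  { unfold D2. apply Rmult_lt_0_compat. apply Rdiv_lt_0_compat; nra.
    apply sqrt_lt_R0. assert (1 <= INR NPD) by (apply (le_INR 1); auto). apply Rdiv_lt_0_compat; lra. }
  set (d := D2 NPD FF KPD B) in *.
  assert (H1 : d * (nCPC / sin ty) < d * (nCPC / sin tx)).
  { apply Rmult_lt_compat_l; auto. unfold Rdiv. apply Rmult_lt_compat_l; try lra.
    apply Rinv_lt_contravar; nra. }
  assert (H0 : 0 < d * (nCPC / sin ty)).
  { apply Rmult_lt_0_compat; auto. apply Rdiv_lt_0_compat; lra. }
  set (Dy := d * (nCPC / sin ty)) in *. set (Dx := d * (nCPC / sin tx)) in *.
  assert (H2 : Dy ^ 2 < Dx ^ 2) by nra.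
  assert (Hw2 : 0 < 2 * w ^ 2) by nra.
  assert (H3 : - Dx ^ 2 / (2 * w ^ 2) < - Dy ^ 2 / (2 * w ^ 2)).
  { unfold Rdiv. apply Rmult_lt_compat_r. apply Rinv_0_lt_compat; lra. lra. }
  assert (H4 : - Dy ^ 2 / (2 * w ^ 2) < 0).
  { unfold Rdiv. assert (0 < / (2*w^2)) by (apply Rinv_0_lt_compat; lra). assert (0 < Dy^2) by nra. nra. }
  pose proof (exp_increasing _ _ H3) as E1. pose proof (exp_increasing _ _ H4) as E2. rewrite exp_0 in E2.
  set (ex := exp (- Dx ^ 2 / (2 * w ^ 2))) in *. set (ey := exp (- Dy ^ 2 / (2 * w ^ 2))) in *.
  assert (P1 : 0 < FF * Pt * (1 - ey)) by (apply Rmult_lt_0_compat; nra).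
  assert (P2 : FF * Pt * (1 - ey) < FF * Pt * (1 - ex)) by (apply Rmult_lt_compat_l; nra).
  set (py := FF * Pt * (1 - ey)) in *. set (px := FF * Pt * (1 - ex)) in *.
  assert (Q : (RPD * py) ^ 2 < (RPD * px) ^ 2) by (assert (0 < RPD*py) by nra; assert (RPD*py < RPD*px) by nra; nra).
  assert (HGB : 0 < Gamma * N0 * B) by (apply Rmult_lt_0_compat; nra).
  assert (Q2 : (RPD * py) ^ 2 / (Gamma * N0 * B) < (RPD * px) ^ 2 / (Gamma * N0 * B)).
  { unfold Rdiv. apply Rmult_lt_compat_r; auto. apply Rinv_0_lt_compat; lra. }
  assert (Q3 : 0 <= (RPD * py) ^ 2 / (Gamma * N0 * B)).
  { unfold Rdiv. apply Rmult_le_pos. apply pow2_ge_0. left; apply Rinv_0_lt_compat; lra. }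
  assert (L : ln (1 + (RPD * py) ^ 2 / (Gamma * N0 * B)) < ln (1 + (RPD * px) ^ 2 / (Gamma * N0 * B))).
  { apply ln_increasing; lra. }
  assert (L2 : 0 < ln 2) by (rewrite <- ln_1; apply ln_increasing; lra).
  unfold log2. apply Rmult_lt_compat_l; auto. unfold Rdiv. apply Rmult_lt_compat_r; auto.
  apply Rinv_0_lt_compat; lra.
Qed.
Lemma L_equiv N NPD FF KPD nCPC Lmax B F : 0 < B -> 0 < Lmax ->
  (L_ADR N NPD FF KPD nCPC B F <= Lmax <-> f_L N NPD FF KPD nCPC Lmax F <= B).
Proof.
  intros HB HL. unfold L_ADR, f_L. cbv zeta.
  set (g := (nCPC + sin (theta N F)) / (sin (theta N F) * tan (theta N F))).
  set (k := K1 NPD FF KPD).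
  replace (k / B * g) with ((k*g)/B) by (field; lra).
  replace (k / Lmax * g) with ((k*g)/Lmax) by (field; lra).
  rewrite !Rle_div_l by lra. rewrite (Rmult_comm B). tauto.
Qed.
Lemma sqrt_le_iff x y : 0 <= x -> 0 <= y -> (sqrt x <= y <-> x <= y ^ 2).
Proof.
  intros. split; intro H1.
  - apply sqrt_le_0; auto. apply pow2_ge_0. rewrite sqrt_pow2; auto.
  - rewrite <- (sqrt_pow2 y); auto. apply sqrt_le_1_alt; auto.
Qed.
Lemma A_equiv N NPD FF KPD nCPC Amax B F : 0 < B -> 0 < Amax -> 0 < sin (theta N F) ->
  0 <= K2 NPD FF KPD nCPC * (1 + tier_sum N (theta N F)) ->
  (A_ADR N NPD FF KPD nCPC B F <= Amax <-> f_A N NPD FF KPD nCPC Amax F <= B).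
Proof.
  intros HB HA Hs HP. unfold A_ADR, f_A. cbv zeta.
  set (s := sin (theta N F)) in *. set (P := K2 NPD FF KPD nCPC * (1 + tier_sum N (theta N F))) in *.
  replace (K2 NPD FF KPD nCPC / (B ^ 2 * s ^ 2) * (1 + tier_sum N (theta N F))) with (P / (B^2*s^2)) by (unfold P; field; lra).
  replace (K2 NPD FF KPD nCPC / Amax * (1 + tier_sum N (theta N F))) with (P / Amax) by (unfold P; field; lra).
  replace (1 / s * sqrt (P / Amax)) with (sqrt (P / Amax) / s) by (field; lra).
  assert (0 < B^2*s^2) by (apply Rmult_lt_0_compat; apply pow_lt; lra).
  rewrite Rle_div_l by lra. rewrite Rle_div_l by lra.
  rewrite sqrt_le_iff; [| apply Rmult_le_pos; [lra | left; apply Rinv_0_lt_compat; lra] | nra].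
  rewrite (Rle_div_l P) by lra.
  replace ((B*s)^2) with (B^2*s^2) by ring. rewrite Rmult_comm. tauto.
Qed.
Lemma maxi_le x y z : Rbar_le (Rbar_maxi x y) z <-> Rbar_le x z /\ Rbar_le y z.
Proof.
  unfold Rbar_maxi. destruct (Rbar_le_dec x y) as [H|H]; split.
  - intro. split; auto. eapply Rbar_le_trans; eauto.
  - tauto.
  - intro. split; auto. eapply Rbar_le_trans; eauto. apply Rbar_lt_le, Rbar_not_le_lt; auto.
  - tauto.
Qed.
Lemma maxi_ge_l x y : Rbar_le x (Rbar_maxi x y).
Proof.
  unfold Rbar_maxi. destruct (Rbar_le_dec x y) as [H|H]; auto. apply Rbar_le_refl.
Qed.
Theorem theorem2
  (Ntier NPD : nat) (FF KPD nCPC Pt w RPD Gamma N0 FOVmin Lmax Amax : R)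
  (HNtier : (1 <= Ntier)%nat) (HNPD : (1 <= NPD)%nat)
  (HFF : 0 < FF <= 1) (HKPD : 0 < KPD) (HnCPC : 1 <= nCPC) (HPt : 0 < Pt)
  (Hw : 0 < w) (HRPD : 0 < RPD) (HGamma : 0 < Gamma) (HN0 : 0 < N0)
  (HFOVmin : 0 < FOVmin <= PI / 2) (HLmax : 0 < Lmax) (HAmax : 0 < Amax) :
  let Rt := rate Ntier NPD FF KPD nCPC Pt w RPD Gamma N0 in
  let feasible := fun B FOV =>
    0 < B /\ 0 < FOV <= PI / 2 /\ FOVmin <= FOV /\
    L_ADR Ntier NPD FF KPD nCPC B FOV <= Lmax /\
    A_ADR Ntier NPD FF KPD nCPC B FOV <= Amax in
  let fF := f_FOV Ntier NPD FF KPD nCPC Lmax Amax FOVmin in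
  let dom1 := fun B => 0 < B /\ Rbar_le (fF B) (Finite (PI / 2)) in
  (* the two suprema coincide *)
  Lub_Rbar (fun r => exists B FOV, feasible B FOV /\ r = Rt B FOV)
  = Lub_Rbar (fun r => exists B, dom1 B /\ r = Rt B (real (fF B)))
  /\
  (* characterisation of maximisers *)
  (forall Bs FOVs : R,
     (feasible Bs FOVs /\
      forall B FOV, feasible B FOV -> Rt B FOV <= Rt Bs FOVs)
     <->
     (Finite FOVs = fF Bs /\ dom1 Bs /\
      forall B, dom1 B -> Rt B (real (fF B)) <= Rt Bs (real (fF Bs)))).
Proof.
  intros Rt feasible fF dom1.
  assert (Hfeas : forall B F, 0 < B -> 0 < F <= PI/2 -> (feasible B F <-> Rbar_le (fF B) (Finite F))).
  { intros B F HB HF. unfold feasible, fF, f_FOV. rewrite !maxi_le.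
    destruct (th_facts Ntier F HNtier HF) as [T1 [T2 [T3 _]]].
    destruct (trig_facts (theta Ntier F)) as [s c]; auto.
    pose proof (ts_nonneg Ntier (theta Ntier F) ltac:(lra) T3).
    pose proof (K2_pos NPD FF KPD nCPC HNPD ltac:(lra) HKPD HnCPC).
    rewrite (L_equiv _ _ _ _ _ _ _ _ HB HLmax).
    rewrite (A_equiv _ _ _ _ _ _ _ _ HB HAmax s) by nra.
    rewrite (gen_inv_le _ B F (fL_mono Ntier NPD FF KPD nCPC Lmax HNtier HKPD HnCPC HLmax)
               (fL_cont Ntier NPD FF KPD nCPC Lmax F HNtier HF) HF).
    rewrite (gen_inv_le _ B F (fA_mono Ntier NPD FF KPD nCPC Amax HNtier ltac:(lra) HKPD HAmax)
               (fA_cont Ntier NPD FF KPD nCPC Amax F HNtier HNPD ltac:(lra) HKPD HnCPC HAmax HF) HF).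
    simpl. tauto. }
  assert (Hdom : forall B, dom1 B -> exists m, fF B = Finite m /\ feasible B m).
  { intros B [HB Hle]. pose proof (maxi_ge_l (Finite FOVmin)
      (Rbar_maxi (gen_inv (f_L Ntier NPD FF KPD nCPC Lmax) B) (gen_inv (f_A Ntier NPD FF KPD nCPC Amax) B))) as Hge.
    fold (f_FOV Ntier NPD FF KPD nCPC Lmax Amax FOVmin B) in Hge. fold fF in Hge.
    destruct (fF B) as [m| |] eqn:E; simpl in Hle, Hge; try contradiction.
    exists m. split; auto. apply Hfeas; auto. lra. rewrite E. simpl; lra. }
  assert (Hf2 : forall B F, feasible B F -> dom1 B /\ exists m, fF B = Finite m /\ feasible B m /\ m <= F).
  { intros B F Hf. pose proof Hf as Hf'. destruct Hf as [HB [HF _]].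
    apply Hfeas in Hf'; auto.
    assert (Hd : dom1 B). { split; auto. eapply Rbar_le_trans; eauto. simpl; lra. }
    split; auto. destruct (Hdom B Hd) as [m [E Hm]]. exists m. rewrite E in Hf'. simpl in Hf'. auto. }
  assert (Hrt : forall B F m, feasible B m -> m <= F -> F <= PI/2 -> Rt B F <= Rt B m).
  { intros B F m [HB [Hm _]] H1 H2. destruct H1 as [H1|H1].
    - left. apply rate_mono; auto; lra.
    - subst; lra. }
  split.
  - apply is_lub_Rbar_unique. destruct (Lub_Rbar_correct (fun r => exists B, dom1 B /\ r = Rt B (real (fF B)))) as [Hub Hl].
    split.
    + intros r [B [F [Hf ->]]]. destruct (Hf2 B F Hf) as [Hd [m [E [Hm Hmf]]]].
      apply Rbar_le_trans with (Finite (Rt B m)).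
      * simpl. apply Hrt; auto. destruct Hf as [_ [HF _]]; lra.
      * apply Hub. exists B. split; auto. rewrite E. reflexivity.
    + intros b Hb. apply Hl. intros r [B [Hd ->]]. apply Hb.
      destruct (Hdom B Hd) as [m [E Hm]]. exists B, m. rewrite E. auto.
  - intros Bs FOVs. split.
    + intros [Hf Hmax]. destruct (Hf2 Bs FOVs Hf) as [Hd [m [E [Hm Hmf]]]].
      assert (Heq : m = FOVs).
      { destruct Hmf as [Hlt|]; auto. exfalso.
        destruct Hf as [HB [HF _]]. pose proof Hm as Hm1. destruct Hm1 as [_ [Hm0 _]].
        pose proof (rate_mono Ntier NPD FF KPD nCPC Pt w RPD Gamma N0 Bs m FOVs HNtier HNPD ltac:(lra) HKPD HnCPC HPt Hw HRPD HGamma HN0 HB ltac:(lra) Hlt ltac:(lra)).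
        pose proof (Hmax Bs m Hm). fold Rt in H. lra. }
      subst m. split; auto. split; auto.
      intros B HdB. destruct (Hdom B HdB) as [m' [E' Hm']]. rewrite E, E'. simpl. apply Hmax; auto.
    + intros [Heq [Hd Hmax]]. destruct (Hdom Bs Hd) as [m [E Hm]].
      rewrite E in Heq. injection Heq as ->. split; auto.
      intros B F Hf. destruct (Hf2 B F Hf) as [HdB [m' [E' [Hm' Hmf']]]].
      apply Rle_trans with (Rt B m').
      * apply Hrt; auto. destruct Hf as [_ [HF _]]; lra.
      * specialize (Hmax B HdB). rewrite E, E' in Hmax. simpl in Hmax. exact Hmax.
Qed.
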